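(* Let $G$ be a plane graph and let $s_0,s_1$ be two distinct vertices on the outer face of $G$. Then the weak labelings of $G$ with special vertices $s_0,s_1$ are in bijection with the pairs $(X,X^* )$, where $X$ is a $2$-orientation of $G$ and $X^*$ is a $2^*$-orientation of the split-dual $G^*_s$.
   Context: An angle of a plane graph is an incidence of a vertex with a face, i.e. a corner of a face at a vertex (between two consecutive edges in the rotation at the vertex). A weak labeling of a plane graph $G$ is a map from the angles of $G$ to $\{0,1\}$ such that: (G0) there are two special vertices $s_0,s_1$ on the outer face with all angles at $s_i$ labeled $i$; (G1) for each vertex $v\notin\{s_0,s_1\}$ the labels around $v$ form one non-empty cyclic interval of $1$s and one non-empty cyclic interval of $0$s; (G2) for each edge, the two labels on the two sides of the edge coincide at one endpoint and differ at the other; (G3) for each face (including the outer face), its labels, read cyclically along the face, form one non-empty interval of $1$s and one non-empty interval of $0$s. A $2$-orientation of $G$ (with respect to $s_0,s_1$) is an orientation of the edges in which every vertex other than $s_0,s_1$ has outdegree exactly $2$. The vertices $s_0,s_1$ divide the boundary of the outer face of $G$ into two arcs $A_0,A_1$. The split-dual $G^*_s$ is obtained from the dual graph $G^*$ by splitting the vertex corresponding to the outer face into two vertices $o^*_0,o^*_1$, where $o^*_i$ keeps the incidences with the dual edges of the edges of $A_i$. A $2^*$-orientation of $G^*_s$ is an orientation in which $o^*_0$ and $o^*_1$ have outdegree $1$ and every other vertex has outdegree $2$. *)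

(* Defs.v *)
From mathcomp Require Import all_boot all_order.
Set Implicit Arguments. Unset Strict Implicit. Unset Printing Implicit Defensive.

(* A combinatorial map: darts (half-edges), the edge involution [alpha],
   the rotation [sigma] (successor of a dart in the counterclockwise
   rotation around its vertex), vertices [vtx] with [tail d] the vertex of
   dart [d], faces [fce] with [face d] the face of dart [d], and the
   distinguished outer face.

   Conventions: the dart [d] also names the ANGLE (corner) at vertex
   [tail d] between [d] and [sigma d]; it also names one SIDE of the edge
   {d, alpha d}, namely the side lying in the angle [d].  The faces are
   the orbits of [phi d = alpha (sigma d)]; reading the face containing
   angle [d] cyclically gives angles d, phi d, phi^2 d, ...; the edge side
   [x] lies between the angles [finv phi x] and [x] on that walk. *)
Record pgraph := PGraph {
  vtx : finType;
  dart : finType;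
  fce : finType;
  tail : dart -> vtx;
  alpha : dart -> dart;
  sigma : dart -> dart;
  face : dart -> fce;
  outer : fce
}.

Definition phi (G : pgraph) (d : dart G) : dart G := alpha (sigma d).

(* G is a connected simple plane graph (genus 0 map, via Euler's formula). *)
Definition is_plane_graph (G : pgraph) : Prop :=
  [/\ (forall d : dart G, alpha (alpha d) = d /\ alpha d != d),
      injective (@sigma G),
      (forall d d' : dart G, tail d = tail d' <-> fconnect (@sigma G) d d')
        /\ (forall v : vtx G, exists d, tail d = v),
      (forall d d' : dart G, face d = face d' <-> fconnect (@phi G) d d')
        /\ (forall f : fce G, exists d, face d = f)
   & [/\ (forall d d' : dart G,
            connect (fun x y => (y == sigma x) || (y == alpha x)) d d'),
         #|vtx G| + #|fce G| = #|dart G| %/ 2 + 2,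
         (forall d : dart G, tail d != tail (alpha d))
       & (forall d d' : dart G, tail d = tail d' ->
            tail (alpha d) = tail (alpha d') -> d = d')]].

Definition two_intervals (s : seq bool) : Prop :=
  exists k a b, 0 < a /\ 0 < b /\ rot k s = nseq a true ++ nseq b false.

(* Weak labeling with special vertices s0, s1 (labels: false = 0, true = 1). *)
Definition weak_labeling (G : pgraph) (s0 s1 : vtx G) (l : dart G -> bool) : Prop :=
  [/\ (forall d, tail d = s0 -> l d = false) /\
               (forall d, tail d = s1 -> l d = true),
      (forall d, tail d <> s0 -> tail d <> s1 ->
                  two_intervals (map l (orbit (@sigma G) d))),
      (* G2 : at endpoint tail d the two sides of edge d are the angles
         d and (finv sigma d) *)
               (forall d, (l d == l (finv (@sigma G) d))
                            != (l (alpha d) == l (finv (@sigma G) (alpha d))))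
    & (forall d, two_intervals (map l (orbit (@phi G) d)))].

(* Orientations: o d = true means the edge of d is directed away from tail d. *)
Definition is_orientation (G : pgraph) (o : dart G -> bool) : Prop :=
  forall d, o (alpha d) = ~~ o d.

Definition two_orientation (G : pgraph) (s0 s1 : vtx G) (o : dart G -> bool) : Prop :=
  is_orientation o /\
  forall v : vtx G, v != s0 -> v != s1 ->
    #|[set d : dart G | (tail d == v) && o d]| = 2.

(* Arcs of the outer face: for an edge side x on the outer face, walk
   forward along the face (angles x, phi x, ...) to the first angle at a
   special vertex.  If it is at s1, the side is on the arc A0 (from s0 to
   s1); if it is at s0, the side is on the arc A1. *)
Definition next_special (G : pgraph) (s0 s1 : vtx G) (x : dart G) : dart G :=
  let s := orbit (@phi G) x in
  nth x s (find (fun y => (tail y == s0) || (tail y == s1)) s).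

(* Vertex of the split dual G*_s at which the dual edge of edge d has its
   end on the side d: inl f for an inner face f, inr false = o*_0,
   inr true = o*_1. *)
Definition dvert (G : pgraph) (s0 s1 : vtx G) (d : dart G) : (fce G + bool)%type :=
  if face d == outer G then inr (tail (next_special s0 s1 d) == s0)
  else inl (face d).

(* 2*-orientation of the split dual: o d = true means the dual edge of the
   edge of d is directed away from its end on side d (i.e. from dvert d). *)
Definition two_star_orientation (G : pgraph) (s0 s1 : vtx G) (o : dart G -> bool) : Prop :=
  [/\ is_orientation o,
      (forall b : bool, #|[set d : dart G | (dvert s0 s1 d == inr b) && o d]| = 1)
    & (forall f : fce G, f != outer G ->
         #|[set d : dart G | (dvert s0 s1 d == inl f) && o d]| = 2)].

(* Main.v *)
Set Warnings "-notation-overridden,-ambiguous-paths,-notation-incompatible-prefix,-redundant-canonical-projection".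
Require Import Defs.
From HB Require Import structures.
From mathcomp Require Import all_boot all_order all_algebra.
From mathcomp Require Import ring zify.
Set Implicit Arguments. Unset Strict Implicit. Unset Printing Implicit Defensive.
Import GRing.Theory.
Fixpoint ch (x : bool) (s : seq bool) : nat :=
  if s is y :: t then (x != y) + ch y t else 0.
Definition cc (s : seq bool) : nat := if s is x :: t then ch x (rcons t x) else 0.

Lemma ch_rcons x s y : ch x (rcons s y) = ch x s + (last x s != y).
Proof. by elim: s x => [|z s IH] x //=; rewrite ?addn0 // IH addnA. Qed.

Lemma ch_cat x s t : ch x (s ++ t) = ch x s + ch (last x s) t.
Proof. by elim: s x => [|z s IH] x //=; rewrite IH addnA. Qed.

Lemma ch_nseq x n : ch x (nseq n x) = 0.
Proof. by elim: n => //= n ->; rewrite eqxx. Qed.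

Lemma last_nseqb (x y : bool) n : last x (nseq n y) = if n is 0 then x else y.
Proof. by case: n => //= n; elim: n x => //= n IH x; rewrite IH. Qed.

Lemma cc_rot1 s : cc (rot 1 s) = cc s.
Proof.
case: s => [|x [|y t]] //; rewrite rot1_cons /=.
by rewrite ch_rcons last_rcons addnC eq_sym.
Qed.

Lemma cc_rot k s : cc (rot k s) = cc s.
Proof.
case: (leqP k (size s)) => [|/ltnW h]; last by rewrite rot_oversize.
elim: k => [|k IH] h; first by rewrite rot0.
by rewrite -add1n rotD // cc_rot1 IH // ltnW.
Qed.

Lemma cc_blocks a b : cc (nseq a.+1 true ++ nseq b.+1 false) = 2.
Proof.
rewrite /= -cats1 -catA ch_cat ch_nseq add0n last_nseqb.
by case: a => [|a] /=; rewrite ch_cat ch_nseq last_nseqb; case: b.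
Qed.

Lemma ch0 x w : ch x w = 0 -> w = nseq (size w) x.
Proof.
elim: w x => [|y w IH] x //=; case: eqP => //= <- /IH ->.
by rewrite size_nseq.
Qed.

Lemma ch1 x w : ch x w = 1 -> exists a b, w = nseq a x ++ nseq b.+1 (~~ x).
Proof.
elim: w x => [|y w IH] x //=; case: (eqVneq x y) => [<-|xy] /=.
  by case/IH => a [b ->]; exists a.+1, b.
have -> : y = ~~ x by case: x y xy => -[].
move=> [] /ch0 E; exists 0, (size w) => /=; congr (_ :: _); exact: E.
Qed.

Lemma ch2 x w : ch x w = 2 -> exists a b c, w = nseq a x ++ nseq b.+1 (~~ x) ++ nseq c.+1 x.
Proof.
elim: w x => [|y w IH] x //=; case: (eqVneq x y) => [<-|xy] /=.
  by case/IH => a [b [c ->]]; exists a.+1, b, c.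
have -> : y = ~~ x by case: x y xy => -[].
move=> [] /ch1 [a [b ->]]; exists 0, a, b; rewrite negbK /=.
by [].
Qed.

Lemma TI_cc s : two_intervals s <-> cc s = 2.
Proof.
split.
  case=> k [a [b [ha [hb E]]]]; rewrite -(cc_rot k) E.
  by case: a ha {E} => // a _; case: b hb => // b _; apply: cc_blocks.
case: s => [|x t] //= /ch2 [a [b [c E]]].
have Et : t = nseq a x ++ nseq b.+1 (~~ x) ++ nseq c x.
  apply: (@rcons_injl _ x); rewrite E -!cats1 -!catA; congr (_ ++ _ ++ _).
  by rewrite -[c.+1]addn1 nseqD.
have Es : x :: t = nseq a.+1 x ++ nseq b.+1 (~~ x) ++ nseq c x by rewrite Et.
rewrite Es; case: x {E Et Es}.
  exists (size (nseq a.+1 true ++ nseq b.+1 false)), (c + a.+1), b.+1.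
  split; first by rewrite addnS.
  split => //; rewrite catA rot_size_cat nseqD catA //.
exists (size (nseq a.+1 false)), b.+1, (c + a.+1).
split => //; split; first by rewrite addnS.
by rewrite rot_size_cat -catA nseqD catA.
Qed.
Local Open Scope ring_scope.
Notation K := 'F_2.
Lemma F2cases (x : K) : x = 0 \/ x = 1.
Proof. case: x => [[|[|n]] Hn]; [left|right|]; try exact: val_inj. by []. Qed.
Lemma F2two : (2%:R : K) = 0. Proof. exact: (pchar_Fp_0 (p:=2)). Qed.
Lemma F2add (x : K) : x + x = 0.
Proof. by rewrite -mulr2n -mulr_natr F2two mulr0. Qed.
Lemma F2nat n : (n%:R : K) = (odd n)%:R.
Proof. by rewrite -modn2 (Fp_nat_mod (p := 2)). Qed.
Lemma F2b (x y : bool) : (x%:R + y%:R : K) = (x (+) y)%:R.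
Proof. by case: x; case: y => //=; rewrite ?addr0 ?add0r // F2add. Qed.
Lemma F2eq (x y : K) : (x + y == 0) = (x == y).
Proof. by rewrite addr_eq0; case: (F2cases y) => ->; rewrite ?oppr0 // -[-1]addr0 -(F2add 1) addrA addNr add0r. Qed.
Lemma F210 : (1 : K) != 0. Proof. exact: oner_neq0. Qed.

Section S.
Variable T : finType.
Lemma dimT : \dim {: {ffun T -> K^o}} = #|T|.
Proof. by rewrite dimvf /dim /= muln1. Qed.
Lemma sum_b (P : pred T) (a : T -> bool) :
  \sum_(i | P i) ((a i)%:R : K) = (odd #|[set i | P i && a i]|)%:R.
Proof.
rewrite -F2nat -sum1_card natr_sum big_mkcond [RHS]big_mkcond /=.
by apply: eq_bigr => i _; rewrite inE; case: (P i); case: (a i).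
Qed.
Lemma sum_eq (P : pred T) (x : T) :
  \sum_(i | P i) (((i == x) : bool)%:R : K) = (P x)%:R.
Proof.
rewrite big_mkcond (bigD1 x) //= eqxx big1 ?addr0; first by case: (P x).
by move=> i /negbTE ->; case: (P i).
Qed.
End S.
Section LA.
Variables (D V F : finType) (tl : D -> V) (fc : D -> F) (al s p : D -> D) (d0 : D).
Hypotheses (alK : involutive al) (al_neq : forall d, al d != d)
  (s_inj : injective s) (p_inj : injective p) (pE : forall d, p d = al (s d))
  (tl_s : forall d, tl (s d) = tl d) (fc_p : forall d, fc (p d) = fc d)
  (conn : forall d d', connect (fun x y => (y == s x) || (y == al x)) d d')
  (tl_surj : forall v, exists d, tl d = v) (fc_surj : forall f, exists d, fc d = f)
  (euler : (#|V| + #|F| = #|D| %/ 2 + 2)%N).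

Local Notation fs := (finv s).
Local Notation fp := (finv p).
Lemma fsK d : fs (s d) = d. Proof. exact: finv_f. Qed.
Lemma sfK d : s (fs d) = d. Proof. exact: f_finv. Qed.
Lemma fpE d : fp d = fs (al d).
Proof.
have E : d = p (fs (al d)) by rewrite pE sfK alK.
by rewrite {1}E finv_f.
Qed.

Definition Rd (d : D) := (enum_rank d < enum_rank (al d))%N.
Lemma Rd_al d : Rd (al d) = ~~ Rd d.
Proof.
rewrite /Rd alK ltnNge leq_eqVlt; congr (~~ _).
apply: orb_idl => /eqP E; have {}E := enum_rank_inj (val_inj E).
by move: (al_neq d); rewrite -E eqxx.
Qed.
Definition rep d := if Rd d then d else al d.
Lemma Rd_rep d : Rd (rep d).
Proof. by rewrite /rep; case: ifP => // /negbT; rewrite Rd_al. Qed.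
Lemma rep_al d : rep (al d) = rep d.
Proof. by rewrite /rep Rd_al; case: (Rd d) => //=; rewrite alK. Qed.

Local Notation Q := {d : D | Rd d}.
Definition repQ d : Q := exist _ (rep d) (Rd_rep d).

Lemma card_Q : #|D| = (#|{: Q}| + #|{: Q}|)%N.
Proof.
rewrite card_sig -(cardC [pred d | Rd d]).
congr (_ + _)%N.
have E : [predC [pred d | Rd d]] =i al @: [set d | Rd d].
  move=> x; rewrite !inE; apply/idP/imsetP => [nx|[y]].
    by exists (al x); rewrite ?inE ?Rd_al ?alK.
  by rewrite inE => ry ->; rewrite Rd_al ry.
rewrite (eq_card E) card_imset ?cardsE //; apply: (can_inj alK).
Qed.

Notation U := {ffun D -> K^o}.
Notation W := {ffun (D + D) -> K^o}.
Notation Y := {ffun ((V + F) + Q) -> K^o}.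

Definition dl (u : U) : W := [ffun i => match i with
  | inl d => u d + u (fs d) | inr d => u d + u (fp d) end].
Definition Cf (w : W) : Y := [ffun j => match j with
  | inl (inl v) => \sum_(d | tl d == v) w (inl d)
  | inl (inr f) => \sum_(d | fc d == f) w (inr d)
  | inr q => let d := val q in w (inl d) + w (inl (al d)) + w (inr d) + w (inr (al d))
  end].
Definition sg (y : Y) : K^o := \sum_j y j.

Fact dl_lin : linear dl.
Proof.
move=> k u v; apply/ffunP => -[d|d]; rewrite !ffunE /=; ring.
Qed.
Fact Cf_lin : linear Cf.
Proof.
move=> k u v; apply/ffunP => -[[x|x]|q]; rewrite !ffunE /=.
- by under eq_bigr do rewrite !ffunE; rewrite big_split /= -mulr_sumr.
- by under eq_bigr do rewrite !ffunE; rewrite big_split /= -mulr_sumr.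
- rewrite !ffunE; ring.
Qed.
Fact sg_lin : linear sg.
Proof.
move=> k u v; rewrite /sg.
by under eq_bigr do rewrite !ffunE; rewrite big_split /= -mulr_sumr.
Qed.
HB.instance Definition _ := GRing.isLinear.Build _ _ _ _ dl dl_lin.
HB.instance Definition _ := GRing.isLinear.Build _ _ _ _ Cf Cf_lin.
HB.instance Definition _ := GRing.isLinear.Build _ _ _ _ sg sg_lin.


Lemma const_conn (T : eqType) (g : D -> T) :
  (forall d, g (s d) = g d) -> (forall d, g (al d) = g d) -> forall d d', g d = g d'.
Proof.
move=> gs ga d d'.
have cl : closed (fun x y => (y == s x) || (y == al x)) [pred x | g x == g d].
  by move=> x y /orP[]/eqP->; rewrite !inE ?gs ?ga.
have := closed_connect cl (conn d d'); rewrite !inE eqxx => /esym/eqP.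
by [].
Qed.

Lemma ker_dl : (lker (linfun dl) <= <[ [ffun _ => 1] : U ]>)%VS.
Proof.
apply/subvP => u; rewrite memv_ker lfunE /= => /eqP H.
have H1 d : u d = u (fs d).
  by have := congr1 (fun w : W => w (inl d)) H; rewrite !ffunE /= => /eqP; rewrite F2eq => /eqP.
have H2 d : u d = u (fp d).
  by have := congr1 (fun w : W => w (inr d)) H; rewrite !ffunE /= => /eqP; rewrite F2eq => /eqP.
apply/vlineP; exists (u d0); apply/ffunP => d; rewrite !ffunE /= -[RHS]/(u d0 * 1) mulr1.
apply: const_conn => x; first by rewrite H1 fsK.
by rewrite H2 fpE alK -H1.
Qed.

Lemma dim_img_dl : (#|D| - 1 <= \dim (limg (linfun dl)))%N.
Proof.
have := limg_ker_dim (linfun dl) fullv; rewrite capfv dimT.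
have : (\dim (lker (linfun dl)) <= 1)%N.
  by apply: leq_trans (dimvS ker_dl) _; rewrite dim_vline; case: (_ != 0).
lia.
Qed.


Lemma F4 (x y z t : K) : x + y + (z + t) + (x + t) + (z + y) = 0.
Proof.
have -> : x + y + (z + t) + (x + t) + (z + y) = (x + x) + (y + y) + ((z + z) + (t + t)) by ring.
by rewrite !F2add ?addr0.
Qed.

Lemma img_ker : (limg (linfun dl) <= lker (linfun Cf))%VS.
Proof.
apply/subvP => w /memv_imgP [u _ ->]; rewrite memv_ker !lfunE /=.
apply/eqP/ffunP => -[[v|f]|q]; rewrite !ffunE /=.
- under eq_bigr do rewrite ffunE; rewrite big_split /=.
  rewrite [X in _ + X](reindex_inj s_inj) /=.
  under [X in _ + X]eq_bigl do rewrite tl_s.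
  under [X in _ + X]eq_bigr do rewrite fsK.
  exact: F2add.
- under eq_bigr do rewrite ffunE; rewrite big_split /=.
  rewrite [X in _ + X](reindex_inj p_inj) /=.
  under [X in _ + X]eq_bigl do rewrite fc_p.
  under [X in _ + X]eq_bigr do rewrite finv_f //.
  exact: F2add.
- by rewrite !ffunE /= !fpE alK F4.
Qed.

Definition eY (j : (V + F) + Q) : Y := [ffun k => ((k == j) : bool)%:R].
Definition eW (i : D + D) : W := [ffun k => ((k == i) : bool)%:R].

Lemma repQ_eq (q : Q) d : (q == repQ d) = (val q == rep d).
Proof. by []. Qed.

Lemma quad_eq (q : Q) d :
  (((val q == d) : bool)%:R + ((al (val q) == d) : bool)%:R : K) = ((q == repQ d) : bool)%:R.
Proof.
case: q => x Rx /=; rewrite repQ_eq /= /rep.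
case Rdd: (Rd d).
  have -> : (al x == d) = false.
    by apply/negbTE; apply: contraL Rx => /eqP E; rewrite -[x]alK Rd_al E Rdd.
  by rewrite addr0.
have -> : (x == d) = false by apply/negbTE; apply: contraL Rx => /eqP ->; rewrite Rdd.
by rewrite add0r -{1}(alK d) (inj_eq (can_inj alK)).
Qed.

Lemma Cf_inl d : Cf (eW (inl d)) = eY (inl (inl (tl d))) + eY (inr (repQ d)).
Proof.
apply/ffunP => -[[v|f]|q]; rewrite !ffunE /=.
- under eq_bigr do rewrite ffunE /=.
  by rewrite sum_eq addr0 eq_sym.
- by rewrite big1 ?addr0 // => i _; rewrite ffunE.
- by rewrite !ffunE /= !addr0 add0r quad_eq.
Qed.

Lemma Cf_inr d : Cf (eW (inr d)) = eY (inl (inr (fc d))) + eY (inr (repQ d)).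
Proof.
apply/ffunP => -[[v|f]|q]; rewrite !ffunE /=.
- by rewrite big1 ?addr0 // => i _; rewrite ffunE.
- under eq_bigr do rewrite ffunE /=.
  by rewrite sum_eq addr0 eq_sym.
- by rewrite !ffunE /= !add0r quad_eq.
Qed.


Lemma K3 (a b c e : K) : a + e = (a + b) + ((c + b) + (c + e)).
Proof.
have -> : (a + b) + ((c + b) + (c + e)) = a + e + (b + b) + (c + c) by ring.
by rewrite !F2add !addr0.
Qed.
Lemma K2 (a b c : K) : a + c = (a + b) + (c + b).
Proof.
have -> : (a + b) + (c + b) = a + c + (b + b) by ring.
by rewrite !F2add !addr0.
Qed.

Lemma Yadd (y : Y) : y + y = 0.
Proof. by apply/ffunP => j; rewrite !ffunE F2add. Qed.

Local Notation Im := (limg (linfun Cf)).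

Lemma ImC_inl d : eY (inl (inl (tl d))) + eY (inr (repQ d)) \in Im.
Proof. by have := memv_img (linfun Cf) (memvf (eW (inl d))); rewrite lfunE /= Cf_inl. Qed.
Lemma ImC_inr d : eY (inl (inr (fc d))) + eY (inr (repQ d)) \in Im.
Proof. by have := memv_img (linfun Cf) (memvf (eW (inr d))); rewrite lfunE /= Cf_inr. Qed.

Lemma memDr (x y : Y) : x \in Im -> (y + x \in Im) = (y \in Im).
Proof.
move=> hx; apply/idP/idP => h; last exact: memvD.
by have := memvD h hx; rewrite -addrA Yadd addr0.
Qed.

Lemma key j : eY (inr (repQ d0)) + eY j \in Im.
Proof.
set j0 := inr (repQ d0).
have qE d : eY j0 + eY (inr (repQ d)) \in Im.
  have -> : (eY j0 + eY (inr (repQ d)) \in Im) = (eY j0 + eY (inr (repQ d0)) \in Im).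
    apply: (const_conn (g := fun d => eY j0 + eY (inr (repQ d)) \in Im)) => x.
      have Z := memvD (ImC_inl x) (ImC_inl (s x)).
      rewrite tl_s in Z.
      have -> : eY j0 + eY (inr (repQ (s x))) =
        (eY j0 + eY (inr (repQ x))) + ((eY (inl (inl (tl x))) + eY (inr (repQ x))) +
          (eY (inl (inl (tl x))) + eY (inr (repQ (s x))))).
        by apply/ffunP => k; rewrite !ffunE; apply: K3.
      by rewrite memDr.
    by have -> : repQ (al x) = repQ x by apply: val_inj; rewrite /= rep_al.
  by rewrite Yadd mem0v.
case: j => [[v|f]|q].
- have [d <-] := tl_surj v.
  have -> : eY j0 + eY (inl (inl (tl d))) =
    (eY j0 + eY (inr (repQ d))) + (eY (inl (inl (tl d))) + eY (inr (repQ d))).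
    by apply/ffunP => k; rewrite !ffunE; apply: K2.
  by rewrite memDr ?ImC_inl.
- have [d <-] := fc_surj f.
  have -> : eY j0 + eY (inl (inr (fc d))) =
    (eY j0 + eY (inr (repQ d))) + (eY (inl (inr (fc d))) + eY (inr (repQ d))).
    by apply/ffunP => k; rewrite !ffunE; apply: K2.
  by rewrite memDr ?ImC_inr.
- have -> : q = repQ (val q) by apply: val_inj; rewrite /= /rep (valP q).
  exact: qE.
Qed.


Lemma dim_img_C : (#|V| + #|F| + #|{: Q}| - 1 <= \dim Im)%N.
Proof.
have sub : (lker (linfun sg) <= Im)%VS.
  apply/subvP => y; rewrite memv_ker lfunE /= => /eqP sy0.
  have -> : y = \sum_j y j *: (eY (inr (repQ d0)) + eY j).
    apply/ffunP => k; rewrite sum_ffunE.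
    under eq_bigr do rewrite !ffunE scalerDr.
    rewrite big_split /= -mulr_suml.
    have -> : \sum_i y i = 0 by exact: sy0.
    rewrite mul0r add0r (bigD1 k) //= eqxx big1 ?addr0.
      by rewrite -[RHS]/(y k * 1) mulr1.
    move=> i ik; rewrite eq_sym (negbTE ik). by rewrite -[LHS]/(y i * 0) mulr0.
  by apply: memv_suml => j _; apply: memvZ; apply: key.
have := limg_ker_dim (linfun sg) fullv; rewrite capfv dimT card_sum card_sum.
have : (\dim (limg (linfun sg)) <= 1)%N.
  by apply: leq_trans (dimvS (subvf _)) _; rewrite dimvf.
have := dimvS sub.
move=> h1 h2 h3.
have h4 : (#|V| + #|F| + #|{: Q}| = \dim (lker (linfun sg)) + \dim (limg (linfun sg)))%N by rewrite h3.
clear h3; lia.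
Qed.

Lemma LA_main (a b : D -> bool) :
  (forall v, ~~ odd #|[set d | (tl d == v) && a d]|) ->
  (forall f, ~~ odd #|[set d | (fc d == f) && b d]|) ->
  (forall d, a d (+) a (al d) (+) b d (+) b (al d) = false) ->
  exists l : D -> bool, forall d, a d = (l d != l (fs d)) /\ b d = (l d != l (fp d)).
Proof.
move=> Ha Hb Hq.
have eqIK : limg (linfun dl) = lker (linfun Cf).
  apply/eqP; rewrite eqEdim img_ker /=.
  have := limg_ker_dim (linfun Cf) fullv; rewrite capfv dimT card_sum.
  have := dim_img_C; have := dim_img_dl; have := card_Q.
  lia.
pose w0 : W := [ffun i => match i with inl d => ((a d)%:R : K) | inr d => (b d)%:R end].
have : w0 \in lker (linfun Cf).
  rewrite memv_ker lfunE /=; apply/eqP/ffunP => -[[v|f]|q]; rewrite !ffunE /=.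
  - under eq_bigr do rewrite ffunE. by rewrite sum_b (negbTE (Ha v)).
  - under eq_bigr do rewrite ffunE. by rewrite sum_b (negbTE (Hb f)).
  - by rewrite !ffunE !F2b Hq.
rewrite -eqIK => /memv_imgP [u _]; rewrite lfunE /= => Hu.
have cv (x y : K) (c : bool) : c%:R = x + y -> c = ((x != 0) != (y != 0)).
  case: (F2cases x) => ->; case: (F2cases y) => ->; rewrite ?F2add ?addr0 ?add0r ?eqxx ?F210 /=;
  case: c => //= /eqP; rewrite ?F210 ?eqxx //= eq_sym ?F210.
exists (fun d => u d != 0) => d; split.
  by apply: cv; have := congr1 (fun w : W => w (inl d)) Hu; rewrite !ffunE /=.
by apply: cv; have := congr1 (fun w : W => w (inr d)) Hu; rewrite !ffunE /=.
Qed.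

End LA.
Local Close Scope ring_scope.
Lemma chT (T : finType) (f : T -> T) (finj : injective f) (l : T -> bool) x k :
  ch (l x) (map l (traject f (f x) k)) = count (fun y => l y != l (finv f y)) (traject f (f x) k).
Proof. by elim: k x => [|k IH] x //=; rewrite IH finv_f // eq_sym. Qed.

Lemma cc_orbit (T : finType) (f : T -> T) (finj : injective f) (l : T -> bool) x :
  cc (map l (orbit f x)) = #|[set y | fconnect f x y & l y != l (finv f y)]|.
Proof.
set P := fun y => l y != l (finv f y).
have E1 : cc (map l (orbit f x)) = count P (orbit f x).
  rewrite /orbit; have := order_gt0 f x; case E: (order f x) => [|m] // _.
  rewrite trajectS /= -map_rcons.
  have -> : rcons (traject f (f x) m) x = traject f (f x) m.+1.
    by rewrite trajectSr -iterSr -E iter_order.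
  by rewrite chT // trajectSr -iterSr -E iter_order // -cats1 count_cat /= addnC addn0.

rewrite E1 -size_filter -(card_uniqP _); last exact/filter_uniq/orbit_uniq.
by apply: eq_card => y; rewrite !inE mem_filter fconnect_orbit andbC.
Qed.

Lemma find_traject (T : Type) (f : T -> T) (P : pred T) x n k :
  k < n -> P (iter k f x) -> (forall i, i < k -> ~~ P (iter i f x)) ->
  find P (traject f x n) = k.
Proof.
elim: k x n => [|k IH] x [|n] //=; first by move=> _ ->.
move=> kn Pk H; have := H 0 isT; rewrite /= => /negbTE ->; congr S.
apply: IH => //; first by rewrite -iterSr.
by move=> i ik; rewrite -iterSr; apply: H.
Qed.

Section Graph.
Variables (G : pgraph) (s0 s1 : vtx G).
Hypotheses (HG : is_plane_graph G) (s01 : s0 != s1)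
  (ex0 : exists d : dart G, tail d = s0 /\ face d = outer G)
  (ex1 : exists d : dart G, tail d = s1 /\ face d = outer G).

Local Notation sg := (@sigma G).
Local Notation al := (@alpha G).
Local Notation ph := (@phi G).
Local Notation fs := (finv (@sigma G)).
Local Notation fp := (finv (@phi G)).

Lemma alK : involutive al.
Proof. by case: HG => H _ _ _ _ d; case: (H d). Qed.
Lemma al_neq d : al d != d.
Proof. by case: HG => H _ _ _ _; case: (H d). Qed.
Lemma s_inj : injective sg.
Proof. by case: HG. Qed.
Lemma p_inj : injective ph.
Proof. by move=> x y; rewrite /phi => /(can_inj alK) /s_inj. Qed.
Lemma tailE d y : (tail y == tail d) = fconnect sg d y.
Proof. by case: HG => _ _ [H _] _ _; apply/eqP/idP => [E|/H //]; apply/H. Qed.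
Lemma faceE d y : (face y == face d) = fconnect ph d y.
Proof. by case: HG => _ _ _ [H _] _; apply/eqP/idP => [E|/H //]; apply/H. Qed.
Lemma tl_s d : tail (sg d) = tail d.
Proof. by apply/eqP; rewrite tailE; apply: connect1; rewrite /= eqxx. Qed.
Lemma fc_p d : face (ph d) = face d.
Proof. by apply/eqP; rewrite faceE; apply: connect1; rewrite /= eqxx. Qed.
Lemma tl_fs d : tail (fs d) = tail d.
Proof. by rewrite -{2}(f_finv s_inj d) tl_s. Qed.
Lemma fc_fp d : face (fp d) = face d.
Proof. by rewrite -{2}(f_finv p_inj d) fc_p. Qed.
Lemma fpEG d : fp d = fs (al d).
Proof.
have E : d = ph (fs (al d)) by rewrite /phi f_finv ?alK //; exact: s_inj.
by rewrite {1}E finv_f //; exact: p_inj.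
Qed.
Lemma connG d d' : connect (fun x y => (y == sg x) || (y == al x)) d d'.
Proof. by case: HG => _ _ _ _ [H _ _ _]. Qed.
Lemma tl_surjG (v : vtx G) : exists d, tail d = v.
Proof. by case: HG => _ _ [_ H] _ _. Qed.
Lemma fc_surjG (f : fce G) : exists d, face d = f.
Proof. by case: HG => _ _ _ [_ H] _. Qed.
Lemma eulerG : #|vtx G| + #|fce G| = #|dart G| %/ 2 + 2.
Proof. by case: HG => _ _ _ _ [_ H _ _]. Qed.

Lemma constG (T : eqType) (g : dart G -> T) :
  (forall d, g d = g (fs d)) -> (forall d, g d = g (fp d)) -> forall d d', g d = g d'.
Proof.
move=> H1 H2; apply: (const_conn (s := sg) (al := al) connG) => x.
  by rewrite H1 finv_f //; exact: s_inj.
by rewrite H2 fpEG alK -H1.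
Qed.

Lemma cnt_v (l : dart G -> bool) d :
  cc (map l (orbit sg d)) = #|[set y | (tail y == tail d) && (l y != l (fs y))]|.
Proof.
rewrite cc_orbit; last exact: s_inj.
by apply: eq_card => y; rewrite !inE tailE.
Qed.
Lemma cnt_f (l : dart G -> bool) d :
  cc (map l (orbit ph d)) = #|[set y | (face y == face d) && (l y != l (fp y))]|.
Proof.
rewrite cc_orbit; last exact: p_inj.
by apply: eq_card => y; rewrite !inE faceE.
Qed.

Definition sp (y : dart G) := (tail y == s0) || (tail y == s1).
Local Notation ns := (next_special s0 s1).

Lemma ns_min d k : k < order ph d -> sp (iter k ph d) ->
  (forall i, i < k -> ~~ sp (iter i ph d)) -> ns d = iter k ph d.
Proof.
move=> kn spk H; rewrite /next_special /orbit.
by rewrite (@find_traject _ _ sp _ _ k) // nth_traject.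
Qed.

Lemma ns_spec d : face d = outer G ->
  exists k, [/\ k < order ph d, sp (iter k ph d) & forall i, i < k -> ~~ sp (iter i ph d)].
Proof.
move=> fd; have [z [tz fz]] := ex0.
have cz : fconnect ph d z by rewrite -faceE fz fd.
have exP : exists k, (k < order ph d) && sp (iter k ph d).
  exists (findex ph d z); rewrite findex_max //= iter_findex // /sp tz eqxx.
  by [].
case: (ex_minnP exP) => k /andP [kn spk] Hm; exists k; split => // i ik.
apply/negP => spi; have := Hm i; rewrite spi (ltn_trans ik kn) => /(_ isT).
by rewrite leqNgt ik.
Qed.

Lemma ns_sp d : face d = outer G -> sp (ns d).
Proof. by move=> /ns_spec [k [kn spk H]]; rewrite (ns_min kn spk H). Qed.

Lemma ns_self d : sp d -> ns d = d.
Proof. by move=> spd; rewrite (@ns_min d 0) ?order_gt0. Qed.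

Lemma order_ph d : order ph (ph d) = order ph d.
Proof. by apply: order_id_cycle; apply: cycle_orbit; exact: p_inj. Qed.

Lemma ns_step d : face d = outer G -> ~~ sp d -> ns d = ns (ph d).
Proof.
move=> fd nspd; have [k [kn spk H]] := ns_spec (etrans (fc_p d) fd).
rewrite (ns_min kn spk H); rewrite order_ph in kn.
rewrite -iterSr; apply: ns_min.
- rewrite ltn_neqAle kn andbT; apply/eqP => E.
  by move: spk; rewrite -iterSr E iter_order ?(negbTE nspd) //; exact: p_inj.
- by rewrite iterSr.
- by move=> [|i] // ik; rewrite iterSr; apply: H.
Qed.

Definition inA (b : bool) (d : dart G) := (face d == outer G) && ((tail (ns d) == s0) == b).

Lemma inA_step b d : ~~ sp d -> inA b d = inA b (ph d).
Proof.
move=> nsp; rewrite /inA fc_p; case: eqP => //= fd.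
by rewrite (ns_step fd nsp).
Qed.

Lemma dvert_inr b d : (dvert s0 s1 d == inr b) = inA b d.
Proof. by rewrite /dvert /inA; case: ifP. Qed.
Lemma dvert_inl f d : f != outer G -> (dvert s0 s1 d == inl f) = (face d == f).
Proof.
move=> fo; rewrite /dvert; case: ifP => [/eqP fd|_] //=.
by rewrite fd; apply/esym/negbTE; rewrite eq_sym.
Qed.


Lemma sp_lab (l : dart G -> bool) :
  (forall d, tail d = s0 -> l d = false) -> (forall d, tail d = s1 -> l d = true) ->
  forall d, sp d -> (tail d == s0) = ~~ l d.
Proof.
move=> H0 H1 d /orP [] /eqP t; first by rewrite t eqxx H0.
by rewrite t H1 //; apply/negbTE; rewrite eq_sym.
Qed.

Lemma exists_change (l : dart G -> bool) b :
  (forall d, tail d = s0 -> l d = false) -> (forall d, tail d = s1 -> l d = true) ->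
  exists d, inA b d && (l d != l (fp d)).
Proof.
move=> H0 H1.
case: (boolP [exists d, inA b d && (l d != l (fp d))]) => [/existsP //|/existsPn H].
have [y [ty fy]] : exists y, tail y = (if b then s0 else s1) /\ face y = outer G.
  by case: (b); [exact: ex0 | exact: ex1].
have [z [tz fz]] : exists z, tail z = (if b then s1 else s0) /\ face z = outer G.
  by case: (b); [exact: ex1 | exact: ex0].
have spy : sp y by rewrite /sp ty; case: (b); rewrite eqxx ?orbT.
have claim k : inA b (iter k fp y) && (l (iter k fp y) == ~~ b).
  elim: k => [|k IH] /=.
    rewrite /inA ns_self // fy eqxx /= ty.
    case: b {H tz spy} ty => ty; first by rewrite eqxx H0.
    by rewrite H1 // andbT; apply/eqP/negbTE; rewrite eq_sym.
  move/andP: IH => [iA lk]; set d := iter k fp y in iA lk *.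
  have ld : l (fp d) = l d.
    by have := H d; rewrite iA /= negbK => /eqP.
  rewrite ld lk andbT.
  case: (boolP (sp (fp d))) => spe.
    have fd : face d == outer G by case/andP: iA.
    rewrite /inA (ns_self spe) fc_fp fd /=.
    by rewrite (sp_lab H0 H1 spe) ld (eqP lk) negbK eqxx.
  by rewrite inA_step // f_finv //; exact: p_inj.
have cz : fconnect fp y z by rewrite (same_fconnect_finv p_inj) -faceE fz fy.
have := claim (findex fp y z); rewrite iter_findex // => /andP [_].
case: b {H claim ty spy} tz => tz; first by rewrite H1.
by rewrite H0.
Qed.

Local Open Scope ring_scope.
Lemma parity_A (l : dart G -> bool) b :
  (forall d, sp d -> l d = false) ->
  ~~ odd #|[set d | inA b d && (l d != l (fp d))]|.
Proof.
move=> H.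
have := sum_b (inA b) (fun d => l d != l (fp d)).
have -> : \sum_(i | inA b i) (((l i != l (fp i)) : bool)%:R : K) = 0.
  have E : forall x y : bool, ((x != y) : bool)%:R = (x%:R + y%:R : K).
    by move=> x y; rewrite F2b; case: x; case: y.
  under eq_bigr do rewrite E.
  rewrite big_split /= [X in _ + X](reindex_inj p_inj) /=.
  have fK := finv_f p_inj.
  under [X in _ + X]eq_bigr do rewrite fK.
  have -> : \sum_(i | inA b i) ((l i)%:R : K) = \sum_(i | inA b (ph i)) (l i)%:R.
    rewrite big_mkcond [RHS]big_mkcond; apply: eq_bigr => i _.
    case: (boolP (sp i)) => spi; first by rewrite H //; case: ifP; case: ifP.
    by rewrite inA_step.
  exact: F2add.
by case: (odd _) => //= /eqP; rewrite eq_sym F210.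
Qed.
Local Close Scope ring_scope.


Lemma card_half (o : dart G -> bool) : (forall d, o (al d) = ~~ o d) ->
  #|dart G| = #|[set d | o d]| + #|[set d | o d]|.
Proof.
move=> Ho; rewrite -(cardsC [set d | o d]); congr (_ + _).
have -> : ~: [set d | o d] = al @: [set d | o d].
  apply/setP => x; rewrite !inE; apply/idP/imsetP => [nx|[y]].
    by exists (al x); rewrite ?inE ?Ho ?alK.
  by rewrite inE => oy ->; rewrite Ho oy.
by rewrite card_imset //; apply: (can_inj alK).
Qed.

Lemma sum_part (J : finType) (g : dart G -> J) (P : pred (dart G)) :
  \sum_(j : J) #|[set x | (g x == j) && P x]| = #|[set x | P x]|.
Proof.
rewrite -sum1_card (partition_big g predT) //=; apply: eq_bigr => j _.
by rewrite -sum1_card; apply: eq_bigl => x; rewrite !inE andbC.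
Qed.

Lemma sum2 (T : finType) (P : pred T) : \sum_(v | P v) 2 = 2 * #|P|.
Proof. by rewrite sum_nat_const mulnC. Qed.

Lemma sum_v (c : vtx G -> nat) : (forall v, v != s0 -> v != s1 -> c v = 2) ->
  \sum_v c v = c s0 + c s1 + 2 * (#|vtx G| - 2).
Proof.
move=> H; rewrite (bigD1 s0) //= (bigD1 s1) /=; last by rewrite eq_sym.
rewrite addnA; congr (_ + _).
rewrite (eq_bigr (fun _ => 2)) => [|v Hv]; last first.
  by case/andP: Hv; exact: H.
rewrite sum2; congr (_ * _).
have -> : #|(fun v : vtx G => (v != s0) && (v != s1))| = #|~: [set s0; s1]|.
  by apply: eq_card => v; rewrite !inE negb_or.
by have := cardsC [set s0; s1]; rewrite cards2 s01 => <-; rewrite addKn.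
Qed.

Lemma dvert_outer d : (dvert s0 s1 d == inl (outer G)) = false.
Proof. by rewrite /dvert; case: ifP => //= /negbT; apply: contraNF => /eqP [->]. Qed.

Lemma sum_f (c : (fce G + bool) -> nat) : c (inl (outer G)) = 0 ->
  (forall f, f != outer G -> c (inl f) = 2) -> c (inr true) = 1 -> c (inr false) = 1 ->
  \sum_y c y = 2 * #|fce G|.
Proof.
move=> Ho Hf Ht Hfa; rewrite big_sumType /= big_bool /= Ht Hfa.
rewrite (bigD1 (outer G)) //= Ho add0n.
rewrite (eq_bigr (fun _ => 2)) => [|f]; last exact: Hf.
rewrite sum2 (cardD1 (outer G) (fce G)) !inE /=.
have -> : #|(fun v : fce G => v != outer G)| = #|[predD1 fce G & outer G]|.
  by apply: eq_card => v; rewrite !inE andbT.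
by rewrite mulnDr muln1 addnC.
Qed.

Lemma cards_A (P : pred (dart G)) :
  #|[set d | (face d == outer G) && P d]| = #|[set d | inA true d && P d]| + #|[set d | inA false d && P d]|.
Proof.
rewrite -(cardsID [set d | tail (ns d) == s0]).
by congr (_ + _); apply: eq_card => d; rewrite !inE /inA;
  case: (face d == outer G); case: (tail (ns d) == s0); case: (P d).
Qed.


Lemma z0ex : exists z, tail z = s0.
Proof. by case: ex0 => z [tz _]; exists z. Qed.

Lemma fwd (l X Xs : dart G -> bool) : weak_labeling s0 s1 l ->
  (forall d, X d = (l d != l (fs d))) -> (forall d, Xs d = (l d != l (fp d))) ->
  two_orientation s0 s1 X /\ two_star_orientation s0 s1 Xs.
Proof.
case=> [[H0 H1] G1 G2 G3] HX HXs.
have Xal d : X (al d) = ~~ X d.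
  rewrite !HX; move: (G2 d).
  by case: (l d == l (fs d)); case: (l (al d) == l (fs (al d))).
have Xsal d : Xs (al d) = ~~ Xs d.
  rewrite !HXs !fpEG alK; move: (G2 d).
  by case: (l d); case: (l (fs d)); case: (l (al d)); case: (l (fs (al d))).
have tot : #|[set d | (face d == outer G) && Xs d]| = 2.
  have [y [_ fy]] := ex0.
  have := G3 y; rewrite TI_cc cnt_f fy => <-.
  by apply: eq_card => d; rewrite !inE HXs.
have Ab b : 0 < #|[set d | inA b d && Xs d]|.
  have [d dA] := exists_change b H0 H1.
  by apply/card_gt0P; exists d; rewrite inE HXs.
split.
  split => // v v0 v1; have [d td] := tl_surjG v.
  have n0 : tail d <> s0 by move=> E; rewrite -td E eqxx in v0.
  have n1 : tail d <> s1 by move=> E; rewrite -td E eqxx in v1.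
  have := G1 d n0 n1; rewrite TI_cc cnt_v td => <-.
  by apply: eq_card => y; rewrite !inE HX.
split => //.
  have := cards_A Xs; rewrite tot; have := Ab true; have := Ab false.
  move=> a1 a2 E b.
  have -> : #|[set d | dvert s0 s1 d == inr b & Xs d]| = #|[set d | inA b d && Xs d]|.
    by apply: eq_card => d; rewrite !inE dvert_inr.
  by case: b; lia.
move=> f fo; have [d fd] := fc_surjG f.
have -> : #|[set d | dvert s0 s1 d == inl f & Xs d]| = #|[set d | (face d == f) && Xs d]|.
  by apply: eq_card => y; rewrite !inE dvert_inl.
have := G3 d; rewrite TI_cc cnt_f fd => <-.
by apply: eq_card => y; rewrite !inE HXs.
Qed.

Lemma injG (l l' : dart G -> bool) : weak_labeling s0 s1 l -> weak_labeling s0 s1 l' ->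
  (forall d, (l d != l (fs d)) = (l' d != l' (fs d))) ->
  (forall d, (l d != l (fp d)) = (l' d != l' (fp d))) -> l =1 l'.
Proof.
case=> [[H0 _] _ _ _] [[H0' _] _ _ _] E1 E2 d.
have C1 x : l x (+) l' x = l (fs x) (+) l' (fs x).
  by move: (E1 x); case: (l x); case: (l' x); case: (l (fs x)); case: (l' (fs x)).
have C2 x : l x (+) l' x = l (fp x) (+) l' (fp x).
  by move: (E2 x); case: (l x); case: (l' x); case: (l (fp x)); case: (l' (fp x)).
have [z tz] := z0ex.
have := @constG _ (fun d => l d (+) l' d) C1 C2 d z; rewrite /= (H0 z tz) (H0' z tz).
by case: (l d); case: (l' d).
Qed.


Lemma iter_tail k d : tail (iter k sg d) = tail d.
Proof. by elim: k => //= k IH; rewrite tl_s. Qed.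

Lemma const_vtx (l : dart G -> bool) v : (forall d, tail d = v -> l d = l (fs d)) ->
  forall d d', tail d = v -> tail d' = v -> l d = l d'.
Proof.
move=> H d d' td td'; have c : fconnect sg d d' by rewrite -tailE td td'.
rewrite -(iter_findex c); elim: (findex _ _ _) => //= k ->.
rewrite [RHS]H ?finv_f //; first exact: s_inj.
by rewrite tl_s iter_tail.
Qed.

Lemma surjG (X Xs : dart G -> bool) : two_orientation s0 s1 X -> two_star_orientation s0 s1 Xs ->
  exists l : dart G -> bool, [/\ weak_labeling s0 s1 l,
    (forall d, X d = (l d != l (fs d))) & (forall d, Xs d = (l d != l (fp d)))].
Proof.
case=> XO Xc [XsO Xs1 Xs2].
have XA b : #|[set d | inA b d && Xs d]| = 1.
  by rewrite -(Xs1 b); apply: eq_card => d; rewrite !inE dvert_inr.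
have XF f : f != outer G -> #|[set d | (face d == f) && Xs d]| = 2.
  by move=> fo; rewrite -(Xs2 f fo); apply: eq_card => d; rewrite !inE dvert_inl.
have Xout : #|[set d | (face d == outer G) && Xs d]| = 2 by rewrite cards_A !XA.
have hX := card_half XO.
have hXs := card_half XsO.
have sV := sum_part (@tail G) X.
rewrite (sum_v (c := fun v => #|[set d | (tail d == v) && X d]|)) in sV; last exact: Xc.
have sF := sum_part (dvert s0 s1) Xs.
rewrite (sum_f (c := fun y => #|[set d | (dvert s0 s1 d == y) && Xs d]|)) in sF; first last.
- exact: (Xs1 false).
- exact: (Xs1 true).
- exact: Xs2.
- apply/eqP; rewrite cards_eq0; apply/eqP/setP => d; rewrite !inE dvert_outer.
  by [].
have nv : 2 <= #|vtx G|.
  by have := max_card [set s0; s1]; rewrite cards2 s01.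
have eu := eulerG.
have c0 : #|[set d | (tail d == s0) && X d]| = 0 by lia.
have c1 : #|[set d | (tail d == s1) && X d]| = 0 by lia.
have X0 d : tail d = s0 -> X d = false.
  move=> td; have := card0_eq c0 d; rewrite !inE td eqxx /=.
  by move=> ->.
have X1 d : tail d = s1 -> X d = false.
  move=> td; have := card0_eq c1 d; rewrite !inE td eqxx /=.
  by move=> ->.
have Hv v : ~~ odd #|[set d | (tail d == v) && X d]|.
  case: (eqVneq v s0) => [->|v0]; first by rewrite c0.
  case: (eqVneq v s1) => [->|v1]; first by rewrite c1.
  by rewrite Xc.
have Hf f : ~~ odd #|[set d | (face d == f) && Xs d]|.
  case: (eqVneq f (outer G)) => [->|fo]; first by rewrite Xout.
  by rewrite XF.
have Hq d : X d (+) X (al d) (+) Xs d (+) Xs (al d) = false.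
  by rewrite XO XsO; case: (X d); case: (Xs d).
have [z tz] := z0ex.
have [l0 Hl0] := @LA_main _ _ _ (@tail G) (@face G) al sg ph z alK al_neq s_inj p_inj (fun d => erefl)
  tl_s fc_p connG tl_surjG fc_surjG eulerG X Xs Hv Hf Hq.
pose l d := l0 d (+) l0 z.
have HXl d : X d = (l d != l (fs d)).
  by rewrite (proj1 (Hl0 d)) /l; case: (l0 d); case: (l0 (fs d)); case: (l0 z).
have HXsl d : Xs d = (l d != l (fp d)).
  by rewrite (proj2 (Hl0 d)) /l; case: (l0 d); case: (l0 (fp d)); case: (l0 z).
have lsame d : X d = false -> l d = l (fs d).
  by rewrite HXl => /negbFE /eqP.
have L0 d : tail d = s0 -> l d = false.
  move=> td; rewrite (@const_vtx l s0 _ d z) //; first by rewrite /l addbb.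
  by move=> x tx; apply: lsame; apply: X0.
have Lc1 d d' : tail d = s1 -> tail d' = s1 -> l d = l d'.
  by apply: const_vtx => x tx; apply: lsame; apply: X1.
have [y1 [ty1 fy1]] := ex1.
have L1 d : tail d = s1 -> l d = true.
  move=> td; rewrite (Lc1 d y1) //.
  case E: (l y1) => //.
  have := @parity_A l false.
  have -> : #|[set d | inA false d && (l d != l (fp d))]| = 1.
    by rewrite -(XA false); apply: eq_card => x; rewrite !inE HXsl.
  move=> H; have : ~~ odd 1.
    apply: H => x /orP [] /eqP tx; first exact: L0.
    by rewrite (Lc1 x y1).
  by [].
exists l; split => //; split.
- by split.
- move=> d n0 n1; rewrite TI_cc cnt_v -(Xc (tail d)); first last.
  + by apply/eqP.
  + by apply/eqP.
  by apply: eq_card => y; rewrite !inE HXl.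
- move=> d; have E x : (l x == l (fs x)) = ~~ X x by rewrite HXl negbK.
  by rewrite !E XO; case: (X d).
- move=> d; rewrite TI_cc cnt_f.
  have -> : #|[set y | (face y == face d) && (l y != l (fp y))]| = #|[set y | (face y == face d) && Xs y]|.
    by apply: eq_card => y; rewrite !inE HXsl.
  case: (eqVneq (face d) (outer G)) => [->|fo]; first exact: Xout.
  exact: XF.
Qed.

End Graph.

Lemma WL_ext (G : pgraph) (s0 s1 : vtx G) (l l' : dart G -> bool) :
  l =1 l' -> weak_labeling s0 s1 l -> weak_labeling s0 s1 l'.
Proof.
move=> E [[H0 H1] G1 G2 G3]; split.
- by split => d td; rewrite -E; [apply: H0 | apply: H1].
- by move=> d a b; rewrite -(eq_map E); apply: G1.
- by move=> d; rewrite -!E.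
- by move=> d; rewrite -(eq_map E).
Qed.

Theorem proposition4 (G : pgraph) (s0 s1 : vtx G) :
  is_plane_graph G -> s0 != s1 ->
  (exists d : dart G, tail d = s0 /\ face d = outer G) ->
  (exists d : dart G, tail d = s1 /\ face d = outer G) ->
  exists f : {ffun dart G -> bool} -> {ffun dart G -> bool} * {ffun dart G -> bool},
    [/\ (forall l : {ffun dart G -> bool}, weak_labeling s0 s1 l ->
           two_orientation s0 s1 (f l).1 /\ two_star_orientation s0 s1 (f l).2),
        (forall l l' : {ffun dart G -> bool}, weak_labeling s0 s1 l -> weak_labeling s0 s1 l' ->
           f l = f l' -> l = l')
      & (forall X Xs : {ffun dart G -> bool},
           two_orientation s0 s1 X -> two_star_orientation s0 s1 Xs ->
           exists2 l : {ffun dart G -> bool}, weak_labeling s0 s1 l & f l = (X, Xs))].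
Proof.
move=> HG s01 ex0 ex1.
exists (fun l : {ffun dart G -> bool} =>
  ([ffun d => l d != l (finv (@sigma G) d)], [ffun d => l d != l (finv (@phi G) d)])).
split.
- move=> l wl; apply: (fwd HG s01 ex0 ex1 wl) => d /=; by rewrite ffunE.
- move=> l l' wl wl' [E1 E2]; apply/ffunP => d; apply: (injG HG ex0 wl wl') => x.
    by have := congr1 (fun f : {ffun dart G -> bool} => f x) E1; rewrite !ffunE.
  by have := congr1 (fun f : {ffun dart G -> bool} => f x) E2; rewrite !ffunE.
- move=> X Xs hX hXs; have [l [wl e1 e2]] := surjG HG s01 ex0 ex1 hX hXs.
  exists [ffun d => l d]; first by apply: WL_ext wl => d; rewrite ffunE.
  by congr (_, _); apply/ffunP => d; rewrite !ffunE ?e1 ?e2.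
Qed.
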